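(* Let $M$ be a finite monoid and let $J$ be a $\mathscr{J}$-class of $M$. Then the relation $\theta_J$ is a congruence of $M$ and $\theta_J\subseteq\pi_J$.
   Context: Green's relations on $M$: $a\mathscr{L}b$ iff $Ma=Mb$, $a\mathscr{R}b$ iff $aM=bM$, $a\mathscr{H}b$ iff $a\mathscr{L}b$ and $a\mathscr{R}b$, $a\mathscr{J}b$ iff $MaM=MbM$. $J_a$ is the $\mathscr{J}$-class of $a$; $J_a\leqslant_{\mathscr{J}}J_b$ iff $MaM\subseteq MbM$, and $J_a<_{\mathscr{J}}J_b$ iff $J_a\leqslant_{\mathscr{J}}J_b$ and $J_a\neq J_b$. For a $\mathscr{J}$-class $J$, let $A(J)=\{a\in M: J_a<_{\mathscr{J}}J\}$ and $B(J)=\{a\in M: J\not\leqslant_{\mathscr{J}}J_a\}$. Define $a\,\theta_J\, b$ [respectively $a\,\pi_J\,b$] iff $a=b$, or $a,b\in A(J)$ [respectively $a,b\in B(J)$], or $a,b\in J$ and $a\mathscr{H}b$. *)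

(* Defs.v *)
From mathcomp Require Import all_boot.
Set Implicit Arguments. Unset Strict Implicit. Unset Printing Implicit Defensive.

Definition is_monoid (T : Type) (mul : T -> T -> T) (one : T) : Prop :=
  (forall x y z, mul x (mul y z) = mul (mul x y) z) /\
  (forall x, mul one x = x) /\ (forall x, mul x one = x).

Section Green.
Variables (T : Type) (mul : T -> T -> T).

Definition in_left_ideal (a x : T) : Prop := exists u, x = mul u a.
Definition in_right_ideal (a x : T) : Prop := exists v, x = mul a v.
Definition in_two_ideal (a x : T) : Prop := exists u v, x = mul u (mul a v).

Definition greenL (a b : T) : Prop := forall x, in_left_ideal a x <-> in_left_ideal b x.
Definition greenR (a b : T) : Prop := forall x, in_right_ideal a x <-> in_right_ideal b x.
Definition greenH (a b : T) : Prop := greenL a b /\ greenR a b.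
Definition greenJ (a b : T) : Prop := forall x, in_two_ideal a x <-> in_two_ideal b x.

Definition leJ (a b : T) : Prop := forall x, in_two_ideal a x -> in_two_ideal b x.
Definition ltJ (a b : T) : Prop := leJ a b /\ ~ greenJ a b.

(* A J-class J is represented by a representative e: J = J_e. *)
Definition inJ (e a : T) : Prop := greenJ a e.
Definition setA (e a : T) : Prop := ltJ a e.
Definition setB (e a : T) : Prop := ~ leJ e a.

Definition thetaJ (e a b : T) : Prop :=
  a = b \/ (setA e a /\ setA e b) \/ (inJ e a /\ inJ e b /\ greenH a b).
Definition piJ (e a b : T) : Prop :=
  a = b \/ (setB e a /\ setB e b) \/ (inJ e a /\ inJ e b /\ greenH a b).

Definition is_congruence (r : T -> T -> Prop) : Prop :=
  (forall a, r a a) /\ (forall a b, r a b -> r b a) /\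
  (forall a b c, r a b -> r b c -> r a c) /\
  (forall a b c, r a b -> r (mul c a) (mul c b) /\ r (mul a c) (mul b c)).
End Green.

(* Main.v *)
From Stdlib Require Import Classical.
Require Import Defs.
From mathcomp Require Import all_boot.

Set Implicit Arguments.
Unset Strict Implicit.
Section S.
Variables (T : finType) (mul : T -> T -> T) (one : T).
Hypothesis hA : forall x y z, mul x (mul y z) = mul (mul x y) z.
Hypothesis h1l : forall x, mul one x = x.
Hypothesis h1r : forall x, mul x one = x.

Lemma leJP a b : leJ mul a b <-> exists u v, a = mul u (mul b v).
Proof.
split.
- move=> H; apply: H; exists one, one; by rewrite h1l h1r.
- move=> [u [v ->]] x [u' [v' ->]].
  exists (mul u' u), (mul v v'); by rewrite !hA.
Qed.

Lemma leJ_trans a b c : leJ mul a b -> leJ mul b c -> leJ mul a c.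
Proof. by move=> H1 H2 x /H1 /H2. Qed.

Lemma greenJ_le a b : greenJ mul a b -> leJ mul a b.
Proof. by move=> H x /H. Qed.
Lemma greenJ_of a b : leJ mul a b -> leJ mul b a -> greenJ mul a b.
Proof. by move=> H1 H2 x; split; [apply H1|apply H2]. Qed.
Lemma greenJ_sym a b : greenJ mul a b -> greenJ mul b a.
Proof. by move=> H x; split => /H. Qed.
Lemma greenJ_trans a b c : greenJ mul a b -> greenJ mul b c -> greenJ mul a c.
Proof. by move=> H1 H2 x; split => [/H1/H2|/H2/H1]. Qed.
Lemma greenL_sym a b : greenL mul a b -> greenL mul b a.
Proof. by move=> H x; split => /H. Qed.
Lemma greenL_trans a b c : greenL mul a b -> greenL mul b c -> greenL mul a c.
Proof. by move=> H1 H2 x; split => [/H1/H2|/H2/H1]. Qed.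
Lemma greenR_sym a b : greenR mul a b -> greenR mul b a.
Proof. by move=> H x; split => /H. Qed.
Lemma greenR_trans a b c : greenR mul a b -> greenR mul b c -> greenR mul a c.
Proof. by move=> H1 H2 x; split => [/H1/H2|/H2/H1]. Qed.

Lemma le_mulL c a : leJ mul (mul c a) a.
Proof. apply/leJP; exists c, one; by rewrite h1r. Qed.
Lemma le_mulR c a : leJ mul (mul a c) a.
Proof. apply/leJP; exists one, c; by rewrite h1l. Qed.

Lemma greenLP a b : greenL mul a b <->
  (exists u, a = mul u b) /\ (exists u, b = mul u a).
Proof.
split.
- move=> H; split; [apply/H|apply/H]; exists one; by rewrite h1l.
- move=> [[u Hu] [u' Hu']] x; split => -[w ->].
  + exists (mul w u); by rewrite -hA -Hu.
  + exists (mul w u'); by rewrite -hA -Hu'.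
Qed.
Lemma greenRP a b : greenR mul a b <->
  (exists u, a = mul b u) /\ (exists u, b = mul a u).
Proof.
split.
- move=> H; split; [apply/H|apply/H]; exists one; by rewrite h1r.
- move=> [[u Hu] [u' Hu']] x; split => -[w ->].
  + exists (mul u w); by rewrite hA -Hu.
  + exists (mul u' w); by rewrite hA -Hu'.
Qed.

Lemma greenL_J a b : greenL mul a b -> greenJ mul a b.
Proof.
move/greenLP=> [[u Hu] [u' Hu']]; apply: greenJ_of.
- rewrite Hu; exact: le_mulL.
- rewrite Hu'; exact: le_mulL.
Qed.
Lemma greenR_J a b : greenR mul a b -> greenJ mul a b.
Proof.
move/greenRP=> [[u Hu] [u' Hu']]; apply: greenJ_of.
- rewrite Hu; exact: le_mulR.
- rewrite Hu'; exact: le_mulR.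
Qed.

Lemma greenR_mulL c a b : greenR mul a b -> greenR mul (mul c a) (mul c b).
Proof.
move/greenRP=> [[u Hu] [u' Hu']]; apply/greenRP; split.
- exists u; by rewrite Hu hA.
- exists u'; by rewrite Hu' hA.
Qed.
Lemma greenL_mulR c a b : greenL mul a b -> greenL mul (mul a c) (mul b c).
Proof.
move/greenLP=> [[u Hu] [u' Hu']]; apply/greenLP; split.
- exists u; by rewrite Hu hA.
- exists u'; by rewrite Hu' hA.
Qed.

Definition pw (s : T) n := iter n (mul s) one.

Lemma pw_add s m n : pw s (m + n) = mul (pw s m) (pw s n).
Proof.
elim: m => [|m IH] /=; first by rewrite h1l.
by rewrite /pw /= -/(pw s (m + n)) IH hA.
Qed.

Lemma pwS' s n : pw s n.+1 = mul (pw s n) s.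
Proof. by rewrite -addn1 pw_add /pw /= h1r. Qed.

Lemma exists_idem s : exists n, 0 < n /\ mul (pw s n) (pw s n) = pw s n.
Proof.
pose f := fun i : 'I_(#|T|.+1) => pw s i.
have : ~~ injectiveb f.
  apply/negP => /injectiveP /leq_card; by rewrite card_ord ltnn.
move/injectivePn => [x [y Hxy Hf]].
have [i [p [Hp Hip]]] : exists i p, 0 < p /\ pw s (i + p) = pw s i.
  rewrite /f in Hf.
  case: (ltngtP x y) => H.
  - exists x, (y - x); split; first by rewrite subn_gt0.
    by rewrite subnKC ?(ltnW H).
  - exists y, (x - y); split; first by rewrite subn_gt0.
    by rewrite subnKC ?(ltnW H).
  - by move: Hxy; rewrite (val_inj H) eqxx.
have per : forall k, pw s (i + k * p) = pw s i.
  elim=> [|k IH]; first by rewrite mul0n addn0.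
  by rewrite mulSn addnA pw_add Hip -pw_add IH.
exists (i.+1 * p); split; first by rewrite muln_gt0.
have Hle : i <= i.+1 * p by rewrite mulSn -{1}(addn0 i) addnC leq_add // leq_pmulr.
rewrite -pw_add -{1}(subnKC Hle) -addnA (addnC (_ - _)) addnA pw_add per.
by rewrite -pw_add subnKC.
Qed.

Lemma stabL a c : greenJ mul (mul c a) a -> greenL mul (mul c a) a.
Proof.
move=> HJ; apply/greenLP; split; first by exists c.
have /leJP [u [v Huv]] : leJ mul a (mul c a) by apply: greenJ_le; apply: greenJ_sym.
pose s := mul u c.
have Hsa : a = mul s (mul a v) by rewrite {1}Huv /s !hA.
have Hn : forall n, exists y, a = mul (pw s n) (mul a y).
  elim=> [|n [y Hy]]; first by exists one; rewrite h1l h1r.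
  exists (mul y v).
  rewrite /pw /= -/(pw s n) {1}Hsa {1}Hy.
  by rewrite !hA.
have [n [Hn0 Hid]] := exists_idem s.
have [y Hy] := Hn n.
have Ha : a = mul (pw s n) a.
  by rewrite {2}Hy hA hA Hid -hA -Hy.
move: Hn0 Ha; case: n {Hy Hid} => // m _; rewrite pwS' /s => Ha.
exists (mul (pw (mul u c) m) u); by rewrite {1}Ha !hA.
Qed.

Lemma stabR a c : greenJ mul (mul a c) a -> greenR mul (mul a c) a.
Proof.
move=> HJ; apply/greenRP; split; first by exists c.
have /leJP [u [v Huv]] : leJ mul a (mul a c) by apply: greenJ_le; apply: greenJ_sym.
pose t := mul c v.
have Hta : a = mul u (mul a t) by rewrite {1}Huv /t !hA.
have Hn : forall n, exists y, a = mul y (mul a (pw t n)).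
  elim=> [|n [y Hy]]; first by exists one; rewrite h1l h1r.
  exists (mul u y).
  rewrite pwS' {1}Hta {1}Hy.
  by rewrite !hA.
have [n [Hn0 Hid]] := exists_idem t.
have [y Hy] := Hn n.
have Ha : a = mul a (pw t n).
  by rewrite {2}Hy -!hA Hid -Hy.
move: Hn0 Ha; case: n {Hy Hid} => // m _; rewrite /pw /= -/(pw t m) /t => Ha.
exists (mul v (pw (mul c v) m)); by rewrite {1}Ha !hA.
Qed.

Lemma A_mulL e a c : setA mul e a -> setA mul e (mul c a).
Proof.
move=> [Hle Hn]; split; first exact: leJ_trans (@le_mulL c a) Hle.
move=> HJ; apply: Hn; apply: greenJ_of => //.
exact: (leJ_trans (greenJ_le (greenJ_sym HJ)) (@le_mulL c a)).
Qed.
Lemma A_mulR e a c : setA mul e a -> setA mul e (mul a c).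
Proof.
move=> [Hle Hn]; split; first exact: leJ_trans (@le_mulR c a) Hle.
move=> HJ; apply: Hn; apply: greenJ_of => //.
exact: (leJ_trans (greenJ_le (greenJ_sym HJ)) (@le_mulR c a)).
Qed.

Lemma H_mulL e a b c : inJ mul e a -> inJ mul e b -> greenH mul a b ->
  thetaJ mul e (mul c a) (mul c b).
Proof.
move=> Ja Jb [HL HR].
have HRc := greenR_mulL c HR.
case: (classic (greenJ mul (mul c a) e)) => Hce.
- right; right.
  have Jcb : greenJ mul (mul c b) e :=
    greenJ_trans (greenR_J (greenR_sym HRc)) Hce.
  have La := stabL (greenJ_trans Hce (greenJ_sym Ja)).
  have Lb := stabL (greenJ_trans Jcb (greenJ_sym Jb)).
  split => //; split => //; split => //.
  exact: greenL_trans La (greenL_trans HL (greenL_sym Lb)).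
- right; left; split.
  + split => //; exact: leJ_trans (@le_mulL c a) (greenJ_le Ja).
  + split; first exact: leJ_trans (@le_mulL c b) (greenJ_le Jb).
    move=> H; apply: Hce; exact: greenJ_trans (greenR_J HRc) H.
Qed.

Lemma H_mulR e a b c : inJ mul e a -> inJ mul e b -> greenH mul a b ->
  thetaJ mul e (mul a c) (mul b c).
Proof.
move=> Ja Jb [HL HR].
have HLc := greenL_mulR c HL.
case: (classic (greenJ mul (mul a c) e)) => Hce.
- right; right.
  have Jcb : greenJ mul (mul b c) e :=
    greenJ_trans (greenL_J (greenL_sym HLc)) Hce.
  have Ra := stabR (greenJ_trans Hce (greenJ_sym Ja)).
  have Rb := stabR (greenJ_trans Jcb (greenJ_sym Jb)).
  split => //; split => //; split => //.
  exact: greenR_trans Ra (greenR_trans HR (greenR_sym Rb)).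
- right; left; split.
  + split => //; exact: leJ_trans (@le_mulR c a) (greenJ_le Ja).
  + split; first exact: leJ_trans (@le_mulR c b) (greenJ_le Jb).
    move=> H; apply: Hce; exact: greenJ_trans (greenL_J HLc) H.
Qed.

End S.

Theorem lemma3p4 (T : finType) (mul : T -> T -> T) (one : T)
  (hM : is_monoid mul one) (e : T) :
  is_congruence mul (thetaJ mul e) /\
  (forall a b, thetaJ mul e a b -> piJ mul e a b).
Proof.
case: hM => hA [h1l h1r].
split; last first.
  move=> a b [->|[[[Ha Hna] [Hb Hnb]]|H]]; [by left| |by right; right].
  right; left; split.
  - move=> Hl; apply: Hna; exact: greenJ_of.
  - move=> Hl; apply: Hnb; exact: greenJ_of.
split; first by move=> a; left.
split.
  move=> a b [->|[[Ha Hb]|[Ja [Jb [HL HR]]]]]; [by left|by right;left|].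
  right; right; split => //; split => //; split;
    [exact: greenL_sym|exact: greenR_sym].
split.
  move=> a b c [->|[[Ha Hb]|[Ja [Jb [HL HR]]]]] // [<-|[[Hb' Hc]|[Jb' [Jc [HL' HR']]]]].
  - by right; left.
  - by right; left.
  - by case: Hb => _ []; apply: Jb'.
  - by right; right.
  - by case: Hb' => _ []; apply: Jb.
  - right; right; split => //; split => //; split;
    [exact: greenL_trans HL'|exact: greenR_trans HR'].
move=> a b c [->|[[Ha Hb]|[Ja [Jb HH]]]]; first by split; left.
- split; right; left; split;
    [exact: A_mulL|exact: A_mulL|exact: A_mulR|exact: A_mulR].
- split; [exact: H_mulL|exact: H_mulR].
Qed.
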